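(* Let $e\ge 1$ and let $(x_n)_{n\in\mathbb{Z}}$ be any doubly infinite path in $X_{PGL_2(F)}$. Then there exist $\alpha,\tau\in\hat G^{(e)}$ such that $\alpha(x_n)=x_{-n}$ and $\tau(x_n)=x_{n+1}$ for all $n\in\mathbb{Z}$.
   Context: Let $F$ be a non-archimedean local field with ring of integers $\mathfrak{o}$, uniformizer $\varpi$, and finite residue field of cardinality $q$. $X=X_{PGL_2(F)}$ is the Bruhat–Tits tree of $PGL_2(F)$: its vertices are homothety classes $[L]$ (under $F^\times$) of $\mathfrak{o}$-lattices $L\subset F^2$, and $[L],[L']$ are joined by an edge iff there are representatives with $\varpi L\subsetneq L'\subsetneq L$; it is a $(q+1)$-regular tree. $d$ is the path-length distance on vertices; $\mathrm{Aut}(X)$ is the group of distance-preserving bijections of the vertex set, with the topology of pointwise convergence. $GL_2(F)$ acts on lattices through its linear action on $F^2$, the centre acts trivially, and this gives an embedding $PGL_2(F)\hookrightarrow\mathrm{Aut}(X)$. For an edge $\eta=\{x_1,x_2\}$ and $e\ge1$, $B(\eta,e)=\{y: \min(d(y,x_1),d(y,x_2))\le e\}$. Define $\hat G^{(e)}=\{g\in\mathrm{Aut}(X):\ \text{for every edge }\eta\ \text{there is } g'\in PGL_2(F)\text{ with } g|_{B(\eta,e)}=g'|_{B(\eta,e)}\}$. A doubly infinite path is a sequence $(x_n)_{n\in\mathbb{Z}}$ of distinct vertices with $x_n,x_{n+1}$ adjacent for all $n$. *)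

(* Defs.v *)
From HB Require Import structures.
From mathcomp Require Import all_boot all_order all_algebra.
Set Implicit Arguments. Unset Strict Implicit. Unset Printing Implicit Defensive.
Import Order.TTheory GRing.Theory Num.Theory.
Local Open Scope ring_scope.

(** The valuation [v : F -> int] is only
    constrained on nonzero elements (v 0 = +oo conventionally). *)

Definition in_o (F : fieldType) (v : F -> int) (x : F) : Prop :=
  x = 0 \/ 0 <= v x.

Definition in_m (F : fieldType) (v : F -> int) (x : F) : Prop :=
  x = 0 \/ 0 < v x.

Definition small (F : fieldType) (v : F -> int) (N : int) (x : F) : Prop :=
  x = 0 \/ N <= v x.

Definition is_discrete_valuation (F : fieldType) (v : F -> int) (pi : F) : Prop :=
  [/\ (forall x y : F, x != 0 -> y != 0 -> v (x * y) = v x + v y),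
      (forall x y : F, x != 0 -> y != 0 -> x + y != 0 ->
          Num.min (v x) (v y) <= v (x + y)),
      pi != 0 & v pi = 1].

Definition valuation_complete (F : fieldType) (v : F -> int) : Prop :=
  forall u : nat -> F,
    (forall N : int, exists M : nat, forall m n : nat,
        (M <= m)%N -> (M <= n)%N -> small v N (u m - u n)) ->
    exists l : F, forall N : int, exists M : nat, forall n : nat,
        (M <= n)%N -> small v N (u n - l).

(* the residue field o/m is finite: o is covered by finitely many cosets of m *)
Definition finite_residue_field (F : fieldType) (v : F -> int) : Prop :=
  exists s : seq F, forall a : F, in_o v a -> exists2 b, b \in s & in_m v (a - b).

Definition nonarch_local_field (F : fieldType) (v : F -> int) (pi : F) : Prop :=
  [/\ is_discrete_valuation v pi, valuation_complete v & finite_residue_field v].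

Definition vset (F : fieldType) := 'cV[F]_2 -> Prop.

(* an o-lattice: L = o b1 + o b2 for a basis (b1,b2) of F^2, i.e. L = g o^2
   with g invertible (columns of g are the basis). *)
Definition is_lattice (F : fieldType) (v : F -> int) (L : vset F) : Prop :=
  exists g : 'M[F]_2, g \in unitmx /\
    forall w : 'cV[F]_2, L w <-> exists c : 'cV[F]_2, (forall i, in_o v (c i 0)) /\ w = g *m c.

Definition scale_set (F : fieldType) (a : F) (L : vset F) : vset F :=
  fun w => exists u, L u /\ w = a *: u.

Definition mat_image (F : fieldType) (g : 'M[F]_2) (L : vset F) : vset F :=
  fun w => exists u, L u /\ w = g *m u.

Definition homothetic (F : fieldType) (L L' : vset F) : Prop :=
  exists a : F, a != 0 /\ forall w, L' w <-> scale_set a L w.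

Definition is_hclass (F : fieldType) (v : F -> int) (C : vset F -> Prop) : Prop :=
  exists L, is_lattice v L /\ forall L', C L' <-> (is_lattice v L' /\ homothetic L L').

Record vertex (F : fieldType) (v : F -> int) := Vertex {
  vcls : vset F -> Prop;
  vcls_ok : is_hclass v vcls }.

Definition strict_subset (F : fieldType) (A B : vset F) : Prop :=
  (forall w, A w -> B w) /\ exists w, B w /\ ~ A w.

Definition adj (F : fieldType) (v : F -> int) (pi : F) (x y : vertex v) : Prop :=
  exists L L', vcls x L /\ vcls y L' /\
    strict_subset (scale_set pi L) L' /\ strict_subset L' L.

Inductive walk (F : fieldType) (v : F -> int) (pi : F) :
    nat -> vertex v -> vertex v -> Prop :=
  | walk0 x : walk pi 0 x x
  | walkS n x z y : adj pi x z -> walk pi n z y -> walk pi n.+1 x y.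

Definition dist_le (F : fieldType) (v : F -> int) (pi : F)
    (x y : vertex v) (n : nat) : Prop :=
  exists2 m, (m <= n)%N & walk pi m x y.

Definition is_aut (F : fieldType) (v : F -> int) (pi : F)
    (g : vertex v -> vertex v) : Prop :=
  bijective g /\
  forall x y n, dist_le pi x y n <-> dist_le pi (g x) (g y) n.

(* the image of the vertex x under h in GL_2(F) (hence PGL_2(F)) is y *)
Definition mat_maps (F : fieldType) (v : F -> int)
    (h : 'M[F]_2) (x y : vertex v) : Prop :=
  forall L, vcls x L -> vcls y (mat_image h L).

Definition in_ball (F : fieldType) (v : F -> int) (pi : F)
    (x1 x2 : vertex v) (e : nat) (y : vertex v) : Prop :=
  dist_le pi y x1 e \/ dist_le pi y x2 e.

Definition Ghat (F : fieldType) (v : F -> int) (pi : F) (e : nat)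
    (g : vertex v -> vertex v) : Prop :=
  is_aut pi g /\
  forall x1 x2 : vertex v, adj pi x1 x2 ->
    exists2 h : 'M[F]_2, h \in unitmx &
      forall y, in_ball pi x1 x2 e y -> mat_maps h y (g y).

Definition dinf_path (F : fieldType) (v : F -> int) (pi : F)
    (x : int -> vertex v) : Prop :=
  injective x /\ forall n : int, adj pi (x n) (x (n + 1)).

(* Main.v *)
Require Import Defs.
From HB Require Import structures.
From mathcomp Require Import all_boot all_order all_algebra.
From mathcomp Require Import zify ring.
From Stdlib Require Import FunctionalExtensionality PropExtensionality ProofIrrelevance ClassicalEpsilon.
Import Order.TTheory GRing.Theory Num.Theory.
Local Open Scope ring_scope.
Set Implicit Arguments. Unset Strict Implicit. Unset Printing Implicit Defensive.

Section Val.
Variable K : fieldType.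
Variable v : K -> int.
Variable pi : K.
Hypothesis hv : is_discrete_valuation v pi.

Lemma vM x y : x != 0 -> y != 0 -> v (x * y) = v x + v y.
Proof. by case: hv => h _ _ _; apply: h. Qed.
Lemma vD x y : x != 0 -> y != 0 -> x + y != 0 -> Num.min (v x) (v y) <= v (x + y).
Proof. by case: hv => _ h _ _; apply: h. Qed.
Lemma pi0 : pi != 0. Proof. by case: hv => _ _ h _. Qed.
Lemma vpi : v pi = 1. Proof. by case: hv => _ _ _ h. Qed.

Lemma v1 : v 1 = 0.
Proof. have h : v 1 = v 1 + v 1 by rewrite -{1}[1]mulr1 vM ?oner_neq0. lia. Qed.
Lemma vN1 : v (-1) = 0.
Proof.
have h1 : (-1 : K) != 0 by rewrite oppr_eq0 oner_neq0.
have h : v 1 = v (-1) + v (-1) by rewrite -{1}[1]mulr1 -mulrNN vM. rewrite v1 in h; lia. Qed.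
Lemma vN x : x != 0 -> v (- x) = v x.
Proof.
move=> hx; have h1 : (-1 : K) != 0 by rewrite oppr_eq0 oner_neq0.
by rewrite -mulN1r vM // vN1 add0r. Qed.
Lemma vV x : x != 0 -> v x^-1 = - v x.
Proof.
move=> hx; have hx' : x^-1 != 0 by rewrite invr_eq0.
have := vM hx hx'; rewrite mulfV // v1 => h; lia. Qed.
Lemma piX0 n : pi ^+ n != 0. Proof. by rewrite expf_eq0 (negbTE pi0) andbF. Qed.
Lemma vX n : v (pi ^+ n) = n.
Proof.
elim: n => [|n IH]; first by rewrite expr0 v1.
rewrite exprS vM ?pi0 ?piX0 // vpi IH; lia. Qed.

Lemma o0 : in_o v 0. Proof. by left. Qed.
Lemma o1 : in_o v 1. Proof. by right; rewrite v1. Qed.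
Lemma oM x y : in_o v x -> in_o v y -> in_o v (x * y).
Proof.
case=> [->|hx]; first by rewrite mul0r; left.
case=> [->|hy]; first by rewrite mulr0; left.
case: (eqVneq x 0) => [->|nx]; first by rewrite mul0r; left.
case: (eqVneq y 0) => [->|ny]; first by rewrite mulr0; left.
right; rewrite vM //; lia. Qed.
Lemma oN x : in_o v x -> in_o v (- x).
Proof.
case=> [->|hx]; first by rewrite oppr0; left.
case: (eqVneq x 0) => [->|nx]; first by rewrite oppr0; left.
by right; rewrite vN. Qed.
Lemma oD x y : in_o v x -> in_o v y -> in_o v (x + y).
Proof.
case=> [->|hx]; first by rewrite add0r.
case=> [->|hy]; first by rewrite addr0; right.
case: (eqVneq x 0) => [->|nx]; first by rewrite add0r; right.
case: (eqVneq y 0) => [->|ny]; first by rewrite addr0; right.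
case: (eqVneq (x + y) 0) => [->|nxy]; first by left.
right; have := vD nx ny nxy; have : 0 <= Num.min (v x) (v y) by rewrite le_min hx hy.
move=> h1 h2; exact: le_trans h1 h2. Qed.
Lemma oB x y : in_o v x -> in_o v y -> in_o v (x - y).
Proof. by move=> hx hy; apply: oD => //; apply: oN. Qed.
Lemma opi : in_o v pi. Proof. by right; rewrite vpi. Qed.
Lemma opiX n : in_o v (pi ^+ n). Proof. by right; rewrite vX. Qed.

Definition pm (a : K) := exists a', in_o v a' /\ a = pi * a'.
Definition unit_o (a : K) := a != 0 /\ v a = 0.

Lemma o_cases a : in_o v a -> pm a \/ unit_o a.
Proof.
case=> [->|ha]; first by left; exists 0; split; [exact: o0| rewrite mulr0].
case: (eqVneq a 0) => [->|na]; first by left; exists 0; split; [exact: o0| rewrite mulr0].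
have [h|h] : v a = 0 \/ 0 < v a by lia.
  by right.
left; exists (a / pi); split; last by field; exact: pi0.
right; rewrite vM ?invr_eq0 ?pi0 // vV ?pi0 // vpi; lia. Qed.

Lemma unit_inv a : unit_o a -> in_o v a^-1.
Proof. by case=> na va; right; rewrite vV // va. Qed.
Lemma unit_o_o a : unit_o a -> in_o v a.
Proof. by case=> _ va; right; rewrite va. Qed.

Lemma pm1 : ~ pm 1.
Proof.
case=> a [[->|ha] e]; first by move: e; rewrite mulr0 => /eqP; rewrite oner_eq0.
have na : a != 0 by apply/eqP=> a0; move: e; rewrite a0 mulr0 => /eqP; rewrite oner_eq0.
have := congr1 v e; rewrite v1 vM ?pi0 // vpi => h; lia. Qed.
Lemma pm_o a : pm a -> in_o v a.
Proof. by case=> a' [h ->]; apply: oM => //; exact: opi. Qed.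
Lemma pmD a b : pm a -> pm b -> pm (a + b).
Proof. case=> a' [ha ->] [b' [hb ->]]; exists (a' + b'); split; [exact: oD| by rewrite mulrDr]. Qed.
Lemma pmM a b : pm a -> in_o v b -> pm (a * b).
Proof. case=> a' [ha ->] hb; exists (a' * b); split; [exact: oM| by rewrite mulrA]. Qed.
Lemma pmN a : pm a -> pm (- a).
Proof. case=> a' [ha ->]; exists (- a'); split; [exact: oN| by rewrite mulrN]. Qed.
Lemma pm_pi a : in_o v a -> pm (pi * a). Proof. by move=> h; exists a. Qed.

Definition inpo (n : nat) (x : K) := exists y, in_o v y /\ x = pi ^+ n * y.

Lemma inpoD n x y : inpo n x -> inpo n y -> inpo n (x + y).
Proof. case=> a [ha ->] [b [hb ->]]; exists (a + b); split; [exact: oD| by rewrite mulrDr]. Qed.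
Lemma inpoN n x : inpo n x -> inpo n (- x).
Proof. case=> a [ha ->]; exists (- a); split; [exact: oN| by rewrite mulrN]. Qed.
Lemma inpoW m n x : (n <= m)%N -> inpo m x -> inpo n x.
Proof.
move=> nm [a [ha ->]]; exists (pi ^+ (m - n) * a); split; first by apply: oM => //; exact: opiX.
by rewrite mulrA -exprD subnKC. Qed.
Lemma small_inpo (n : nat) x : small v n x <-> inpo n x.
Proof.
split.
  case=> [->|h]; first by exists 0; split; [exact: o0| rewrite mulr0].
  case: (eqVneq x 0) => [->|nx]; first by exists 0; split; [exact: o0| rewrite mulr0].
  exists (x / pi ^+ n); split; last by field; exact: piX0.
  right; rewrite vM ?invr_eq0 ?piX0 // vV ?piX0 // vX; lia.
case=> a [[->|ha] ->]; first by left; rewrite mulr0.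
case: (eqVneq a 0) => [->|na]; first by left; rewrite mulr0.
right; rewrite vM ?piX0 // vX; lia. Qed.


Implicit Types (L A B C M : vset K) (w : 'cV[K]_2).
Definition seqv (A B : vset K) := forall w, A w <-> B w.

Lemma seqv_sym A B : seqv A B -> seqv B A.
Proof. by move=> h w; split=> /h. Qed.
Lemma seqv_trans A B C : seqv A B -> seqv B C -> seqv A C.
Proof. by move=> h1 h2 w; split=> [/h1/h2|/h2/h1]. Qed.

Lemma lat_closD L w w' : is_lattice v L -> L w -> L w' -> L (w + w').
Proof.
case=> g [_ hg] /hg [c [hc ->]] /hg [c' [hc' ->]].
apply/hg; exists (c + c'); split; last by rewrite mulmxDr.
by move=> i; rewrite mxE; apply: oD.
Qed.
Lemma lat_closZ L w k : is_lattice v L -> L w -> in_o v k -> L (k *: w).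
Proof.
case=> g [_ hg] /hg [c [hc ->]] hk.
apply/hg; exists (k *: c); split; last by rewrite scalemxAr.
by move=> i; rewrite mxE; apply: oM.
Qed.
Lemma lat_eqv L L' : is_lattice v L -> seqv L L' -> is_lattice v L'.
Proof.
case=> g [ug hg] e; exists g; split => // w; split.
  by move/e/hg. by move/hg/e.
Qed.
Lemma lat_scale L a : is_lattice v L -> a != 0 -> is_lattice v (scale_set a L).
Proof.
case=> g [ug hg] na; exists (a *: g); split.
  by rewrite unitmxZ // unitfE.
move=> w; split.
  case=> u [/hg [c [hc ->]] ->]; exists c; split => //; by rewrite scalemxAl.
case=> c [hc ->]; exists (g *m c); split; first by apply/hg; exists c.
by rewrite scalemxAl.
Qed.
Lemma lat_image L h : is_lattice v L -> h \in unitmx -> is_lattice v (mat_image h L).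
Proof.
case=> g [ug hg] uh; exists (h *m g); split.
  by rewrite unitmx_mul uh ug.
move=> w; split.
  case=> u [/hg [c [hc ->]] ->]; exists c; split => //; by rewrite mulmxA.
case=> c [hc ->]; exists (g *m c); split; first by apply/hg; exists c.
by rewrite mulmxA.
Qed.

Lemma scale_eqv a A B : seqv A B -> seqv (scale_set a A) (scale_set a B).
Proof. by move=> e w; split; case=> u [/e h ->]; exists u. Qed.
Lemma scale_scale a b A : seqv (scale_set a (scale_set b A)) (scale_set (a * b) A).
Proof.
move=> w; split.
  case=> u [[u' [h ->]] ->]; exists u'; split => //; by rewrite scalerA.
case=> u [h ->]; exists (b *: u); split; first by exists u.
by rewrite scalerA.
Qed.
Lemma scale1 A : seqv (scale_set 1 A) A.
Proof. move=> w; split; first by case=> u [h ->]; rewrite scale1r.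
by move=> h; exists w; rewrite scale1r. Qed.

Lemma hom_eqv L L' : seqv L L' -> homothetic L L'.
Proof. move=> e; exists 1; split; first exact: oner_neq0.
exact: seqv_trans (seqv_sym e) (seqv_sym (scale1 L)). Qed.
Lemma hom_refl L : homothetic L L.
Proof. by apply: hom_eqv. Qed.
Lemma hom_scale L a : a != 0 -> homothetic L (scale_set a L).
Proof. by move=> na; exists a; split. Qed.
Lemma hom_trans A B C : homothetic A B -> homothetic B C -> homothetic A C.
Proof.
case=> a [na ea] [b [nb eb]]; exists (b * a); split; first by rewrite mulf_neq0.
apply: seqv_trans eb _; apply: seqv_trans (scale_eqv b ea) _; exact: scale_scale.
Qed.
Lemma hom_sym A B : homothetic A B -> homothetic B A.
Proof.
case=> a [na ea]; exists a^-1; split; first by rewrite invr_eq0.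
apply: seqv_sym; apply: seqv_trans (scale_eqv _ ea) _.
apply: seqv_trans (scale_scale _ _ _) _; rewrite mulVf //; exact: scale1.
Qed.

Lemma hclass_mem (C : vset K -> Prop) L : is_hclass v C -> C L ->
  forall L', C L' <-> is_lattice v L' /\ homothetic L L'.
Proof.
case=> L0 [l0 hC] /hC [lL h0] L'; split.
  by move/hC => [lL' h']; split => //; apply: hom_trans (hom_sym h0) h'.
by case=> lL' h'; apply/hC; split => //; apply: hom_trans h0 h'.
Qed.

Lemma cls_lat (x : vertex v) L : vcls x L -> is_lattice v L.
Proof. by move=> h; have [] := (hclass_mem (vcls_ok x) h L).1 h. Qed.
Lemma cls_mem (x : vertex v) L L' : vcls x L ->
  (vcls x L' <-> is_lattice v L' /\ homothetic L L').
Proof. move=> h; exact: hclass_mem (vcls_ok x) h L'. Qed.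
Lemma cls_eqv (x : vertex v) L L' : vcls x L -> seqv L L' -> vcls x L'.
Proof.
move=> h e; apply/(cls_mem _ h); split; last exact: hom_eqv.
exact: lat_eqv (cls_lat h) e.
Qed.
Lemma cls_scale (x : vertex v) L a : vcls x L -> a != 0 -> vcls x (scale_set a L).
Proof.
move=> h na; apply/(cls_mem _ h); split; last exact: hom_scale.
exact: lat_scale (cls_lat h) na.
Qed.
Lemma vertex_ext (x y : vertex v) : (forall L, vcls x L <-> vcls y L) -> x = y.
Proof.
case: x y => [C1 h1] [C2 h2] /= H.
have E : C1 = C2.
  by apply: functional_extensionality => L; apply: propositional_extensionality.
subst; f_equal; apply: proof_irrelevance.
Qed.
Lemma vertex_eq (x y : vertex v) L L' : vcls x L -> vcls y L' -> seqv L L' -> x = y.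
Proof.
move=> hx hy e; apply: vertex_ext => M.
rewrite (cls_mem _ hx) (cls_mem _ hy); split; case=> lM hM; split => //.
  exact: hom_trans (hom_sym (hom_eqv e)) hM.
exact: hom_trans (hom_eqv e) hM.
Qed.


Definition lc (f1 f2 : 'cV[K]_2) (a b : K) := a *: f1 + b *: f2.
Lemma lcD f1 f2 a b c d : lc f1 f2 a b + lc f1 f2 c d = lc f1 f2 (a + c) (b + d).
Proof. by rewrite /lc !scalerDl addrACA. Qed.
Lemma lcZ f1 f2 k a b : k *: lc f1 f2 a b = lc f1 f2 (k * a) (k * b).
Proof. by rewrite /lc scalerDr !scalerA. Qed.
Lemma lc_congr f1 f2 a b c d : a = c -> b = d -> lc f1 f2 a b = lc f1 f2 c d.
Proof. by move=> -> ->. Qed.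

Definition Lam f1 f2 s n : vset K := fun w =>
  exists a b, [/\ in_o v a, in_o v b & w = lc f1 f2 a (a * s + pi ^+ n * b)].
Definition Mam f1 f2 s n : vset K := fun w =>
  exists a b, [/\ in_o v a, in_o v b & w = lc f1 f2 (pi * a) (pi * a * s + pi ^+ n * b)].

Lemma full f1 f2 s n t L : is_lattice v L -> in_o v s -> in_o v t ->
  L (lc f1 f2 1 (s + pi ^+ n * t)) -> L (lc f1 f2 0 (pi ^+ n)) ->
  forall w, Lam f1 f2 s n w -> L w.
Proof.
move=> lL hs ht hu hz w [a [b [ha hb ->]]].
have -> : lc f1 f2 a (a * s + pi ^+ n * b) =
   a *: lc f1 f2 1 (s + pi ^+ n * t) + (b - a * t) *: lc f1 f2 0 (pi ^+ n).
  by rewrite !lcZ lcD; apply: lc_congr; ring.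
apply: lat_closD => //; apply: lat_closZ => //; apply: oB => //; exact: oM.
Qed.

Lemma step f1 f2 s n L : is_lattice v L -> in_o v s ->
  strict_subset (scale_set pi (Lam f1 f2 s n)) L -> strict_subset L (Lam f1 f2 s n) ->
  (exists t, in_o v t /\ seqv L (Lam f1 f2 (s + pi ^+ n * t) n.+1))
  \/ seqv L (Mam f1 f2 s n).
Proof.
move=> lL hs [Hpi [w0 [Lw0 nw0]]] [Hsub [w1 [Lamw1 nLw1]]].
have nfull : ~ (forall w, Lam f1 f2 s n w -> L w) by move=> h; apply: nLw1; apply: h.
have piLam : forall a b, in_o v a -> in_o v b ->
    L (lc f1 f2 (pi * a) (pi * a * s + pi ^+ n.+1 * b)).
  move=> a b ha hb; apply: Hpi; exists (lc f1 f2 a (a * s + pi ^+ n * b)); split.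
    by exists a, b.
  by rewrite lcZ exprS; apply: lc_congr; ring.

have [a [b [ha hb e0]]] := Hsub _ Lw0.
case: (o_cases ha) => [[a' [ha' ea]] | ua].
  case: (o_cases hb) => [[b' [hb' eb]]|ub].
    exfalso; apply: nw0; exists (lc f1 f2 a' (a' * s + pi ^+ n * b')); split.
      by exists a', b'.
    by rewrite e0 ea eb lcZ; apply: lc_congr; ring.
  have nb : b != 0 by case: ub.
  have hz : L (lc f1 f2 0 (pi ^+ n)).
    have -> : lc f1 f2 0 (pi ^+ n) =
       b^-1 *: (w0 + (-1) *: lc f1 f2 (pi * a') (pi * a' * s + pi ^+ n.+1 * 0)).
      by rewrite e0 ea !lcZ lcD !lcZ; apply: lc_congr; field.
    apply: lat_closZ => //; last exact: unit_inv.
    apply: lat_closD => //; apply: lat_closZ => //; [apply: piLam => //; exact: o0 | apply: oN; exact: o1].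
  right => w; split.
    move=> Lw; have [al [be [hal hbe ew]]] := Hsub _ Lw.
    case: (o_cases hal) => [[al' [hal' eal]] | ual].
      exists al', be; split => //; rewrite ew eal; apply: lc_congr; ring.
    have nal : al != 0 by case: ual.
    exfalso; apply: nfull; apply: (@full _ _ _ _ (be / al)) => //.
      apply: oM => //; exact: unit_inv.
    have -> : lc f1 f2 1 (s + pi ^+ n * (be / al)) = al^-1 *: w.
      by rewrite ew lcZ; apply: lc_congr; field.
    by apply: lat_closZ => //; exact: unit_inv.
  case=> al [be [hal hbe ->]].
  have -> : lc f1 f2 (pi * al) (pi * al * s + pi ^+ n * be) =
     lc f1 f2 (pi * al) (pi * al * s + pi ^+ n.+1 * 0) + be *: lc f1 f2 0 (pi ^+ n).
    by rewrite lcZ lcD; apply: lc_congr; ring.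
  apply: lat_closD => //; [apply: piLam => //; exact: o0| exact: lat_closZ].
have na : a != 0 by case: ua.
have ht : in_o v (b / a) by apply: oM => //; exact: unit_inv.
have hu : L (lc f1 f2 1 (s + pi ^+ n * (b / a))).
  have -> : lc f1 f2 1 (s + pi ^+ n * (b / a)) = a^-1 *: w0.
    by rewrite e0 lcZ; apply: lc_congr; field.
  by apply: lat_closZ => //; exact: unit_inv.
left; exists (b / a); split => //.
move=> w; split.
  move=> Lw; have [al [be [hal hbe ew]]] := Hsub _ Lw.
  have hg : in_o v (be - al * (b / a)) by apply: oB => //; apply: oM.
  case: (o_cases hg) => [[g' [hg' eg]] | ug].
    exists al, g'; split => //; rewrite ew; apply: lc_congr => //.
    have -> : be = pi * g' + al * (b / a) by rewrite -eg; ring.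
    rewrite exprS; ring.
  have ng : be - al * (b / a) != 0 by case: ug.
  exfalso; apply: nfull; apply: (@full _ _ _ _ (b / a)) => //.
  have -> : lc f1 f2 0 (pi ^+ n) =
     (be - al * (b / a))^-1 *: (w + (- al) *: lc f1 f2 1 (s + pi ^+ n * (b / a))).
    rewrite ew !lcZ lcD !lcZ; apply: lc_congr; first by rewrite mulr1 subrr mulr0.
    have -> : al * s + pi ^+ n * be + - al * (s + pi ^+ n * (b / a)) = (be - al * (b / a)) * pi ^+ n by ring.
    by rewrite mulKf.
  apply: lat_closZ => //; last exact: unit_inv.
  by apply: lat_closD => //; apply: lat_closZ => //; exact: oN.
case=> al [be [hal hbe ->]].
have -> : lc f1 f2 al (al * (s + pi ^+ n * (b / a)) + pi ^+ n.+1 * be) =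
   al *: lc f1 f2 1 (s + pi ^+ n * (b / a)) + lc f1 f2 (pi * 0) (pi * 0 * s + pi ^+ n.+1 * be).
  by rewrite lcZ lcD; apply: lc_congr; ring.
apply: lat_closD => //; [exact: lat_closZ| apply: piLam => //; exact: o0].
Qed.


Lemma strict_eqv A A' B B' : seqv A A' -> seqv B B' ->
  strict_subset A B -> strict_subset A' B'.
Proof.
move=> ea eb [h [w [hB nA]]]; split.
  by move=> u /ea /h /eb.
by exists w; split; [apply/eb| move=> /ea].
Qed.
Lemma strict_scale a A B : a != 0 -> strict_subset A B ->
  strict_subset (scale_set a A) (scale_set a B).
Proof.
move=> na [h [w [hB nA]]]; split.
  by move=> u [u' [hu ->]]; exists u'; split => //; apply: h.
exists (a *: w); split; first by exists w.
case=> u [hu e]; apply: nA.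
have -> : w = u by rewrite -[w](scalerK na) e scalerK.
done.
Qed.
Lemma scale_comm a b A : seqv (scale_set a (scale_set b A)) (scale_set b (scale_set a A)).
Proof.
apply: seqv_trans (scale_scale _ _ _) _; rewrite mulrC.
exact: seqv_sym (scale_scale _ _ _).
Qed.

Lemma adj_rep (x y : vertex v) L : adj pi x y -> vcls x L ->
  exists L', [/\ vcls y L', strict_subset (scale_set pi L) L' & strict_subset L' L].
Proof.
case=> M0 [M1 [hK [hK' [s1 s2]]]] hL.
have [_ [a [na ea]]] := (cls_mem _ hK).1 hL.
exists (scale_set a M1); split.
- exact: cls_scale.
- apply: strict_eqv (strict_scale na s1).
    apply: seqv_trans (scale_comm _ _ _) _; apply: scale_eqv; exact: seqv_sym.
  by move=> w.
- apply: strict_eqv (strict_scale na s2) => //; exact: seqv_sym.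
Qed.

Lemma adj_sym (x y : vertex v) : adj pi x y -> adj pi y x.
Proof.
case=> L [L' [hL [hL' [s1 s2]]]].
exists L', (scale_set pi L); split => //; split; first exact: cls_scale hL (pi0).
split => //; exact: strict_scale pi0 s2.
Qed.

Lemma Lam_shift f1 f2 s n t : in_o v t ->
  seqv (Lam f1 f2 (s + pi ^+ n * t) n) (Lam f1 f2 s n).
Proof.
move=> ht w; split; case=> a [b [ha hb ->]].
  exists a, (a * t + b); split => //; [apply: oD => //; exact: oM| apply: lc_congr; ring].
exists a, (b - a * t); split => //; [apply: oB => //; exact: oM| apply: lc_congr; ring].
Qed.
Lemma Mam_pi f1 f2 s n : seqv (Mam f1 f2 s n.+1) (scale_set pi (Lam f1 f2 s n)).
Proof.
move=> w; split.
  case=> a [b [ha hb ->]]; exists (lc f1 f2 a (a * s + pi ^+ n * b)); split.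
    by exists a, b.
  by rewrite lcZ exprS; apply: lc_congr; ring.
case=> u [[a [b [ha hb ->]]] ->]; exists a, b; split => //.
by rewrite lcZ exprS; apply: lc_congr; ring.
Qed.
Lemma lc_swap f1 f2 a b : lc f1 f2 a b = lc f2 f1 b a.
Proof. by rewrite /lc addrC. Qed.
Lemma Mam0 f1 f2 : seqv (Mam f1 f2 0 0) (Lam f2 f1 0 1).
Proof.
move=> w; split; case=> a [b [ha hb ->]]; exists b, a; split => //;
  rewrite lc_swap; apply: lc_congr; ring.
Qed.
Lemma Lam00 f1 f2 : seqv (Lam f1 f2 0 0) (Lam f2 f1 0 0).
Proof.
move=> w; split; case=> a [b [ha hb ->]]; exists b, a; split => //;
  rewrite lc_swap; apply: lc_congr; ring.
Qed.


Section Ray.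
Hypothesis hc : valuation_complete v.
Variable r : nat -> vertex v.
Hypothesis hadj : forall n, adj pi (r n) (r n.+1).
Hypothesis hnb : forall n, r n.+2 <> r n.
Variables g1 g2 : 'cV[K]_2.

Definition Pr n s := [/\ in_o v s, vcls (r n.+1) (Lam g1 g2 s n.+1) & vcls (r n) (Lam g1 g2 s n)].

Lemma stepP n s : Pr n s -> exists t, in_o v t /\ Pr n.+1 (s + pi ^+ n.+1 * t).
Proof.
case=> hs h1 h0.
have [L' [hL' st1 st2]] := adj_rep (hadj n.+1) h1.
case: (step (cls_lat hL') hs st1 st2) => [[t [ht e]] | e].
  exists t; split => //; split.
  - by apply: oD => //; apply: oM => //; exact: opiX.
  - exact: cls_eqv hL' e.
  - by apply: cls_eqv h1 _; apply: seqv_sym; apply: Lam_shift.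
have E : r n.+2 = r n.
  apply: vertex_eq hL' (cls_scale h0 pi0) _.
  exact: seqv_trans e (Mam_pi _ _ _ _).
by case: (hnb E).
Qed.

Variable s1 : K.
Hypothesis Ps1 : Pr 0 s1.

Definition stp n s := epsilon (inhabits (0 : K))
  (fun t => in_o v t /\ Pr n.+1 (s + pi ^+ n.+1 * t)).
Fixpoint sq k := if k is k'.+1 then sq k' + pi ^+ k'.+1 * stp k' (sq k') else s1.

Lemma sqP k : Pr k (sq k) /\ in_o v (stp k (sq k)).
Proof.
elim: k => [|k [IH _]].
  split => //; exact: (proj1 (epsilon_spec (inhabits (0:K)) _ (stepP Ps1))).
have [ht hP] := epsilon_spec (inhabits (0:K)) _ (stepP IH).
have P1 : Pr k.+1 (sq k.+1) by [].
split => //; exact: (proj1 (epsilon_spec (inhabits (0:K)) _ (stepP P1))).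
Qed.

Lemma sq_diff k m : (k <= m)%N -> inpo k.+1 (sq m - sq k).
Proof.
elim: m => [|m IH] hkm.
  have -> : k = 0%N by lia.
  by exists 0; split; [exact: o0| rewrite subrr mulr0].
case: (eqVneq k m.+1) => [->|nk].
  by exists 0; split; [exact: o0| rewrite subrr mulr0].
have hkm' : (k <= m)%N by lia.
have -> : sq m.+1 - sq k = pi ^+ m.+1 * stp m (sq m) + (sq m - sq k) by rewrite /=; ring.
apply: inpoD; last exact: IH.
apply: (@inpoW m.+1); first lia.
exists (stp m (sq m)); split => //; exact: (sqP m).2.
Qed.

Lemma inpo_small (M : nat) (N : int) x : inpo M x -> N <= M -> small v N x.
Proof.
move=> /small_inpo [->|h] hN; [by left| right; exact: le_trans hN h].
Qed.

Lemma ray_from : exists l, in_o v l /\ forall n, vcls (r n) (Lam g1 g2 l n).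
Proof.
have cauchy : forall N : int, exists M : nat, forall m n : nat,
    (M <= m)%N -> (M <= n)%N -> small v N (sq m - sq n).
  move=> N; exists `|N|%N => m n hm hn.
  apply: (@inpo_small `|N|%N); last lia.
  have -> : sq m - sq n = (sq m - sq `|N|%N) - (sq n - sq `|N|%N) by ring.
  apply: (@inpoW (`|N|%N).+1) => //.
  apply: inpoD; [exact: sq_diff| apply: inpoN; exact: sq_diff].
have [l hl] := hc cauchy.
have near : forall k, inpo k.+1 (sq k - l).
  move=> k; have [M hM] := hl (Posz k.+1).
  have h1 := hM (maxn M k) (leq_maxl _ _).
  have h1' : inpo k.+1 (sq (maxn M k) - l) by apply/small_inpo.
  have -> : sq k - l = (sq (maxn M k) - l) - (sq (maxn M k) - sq k) by ring.
  apply: inpoD => //; apply: inpoN; apply: sq_diff; exact: leq_maxr.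
have [y0 [hy0 ey0]] := near 0%N.
have hl0 : in_o v l.
  have -> : l = sq 0 - pi ^+ 1 * y0 by rewrite -ey0; ring.
  apply: oB; first by case: (sqP 0) => [[]].
  apply: oM => //; exact: opiX.
exists l; split => // n; case: n => [|k].
  have [[_ _ h0] _] := sqP 0.
  apply: cls_eqv h0 _; apply: seqv_sym.
  have -> : l = sq 0 + pi ^+ 0 * (- (pi * y0)) by rewrite expr0 -ey0; ring.
  apply: Lam_shift; apply: oN; apply: oM => //; exact: opi.
have [[_ h1 _] _] := sqP k.
have [y [hy ey]] := near k.
apply: cls_eqv h1 _; apply: seqv_sym.
have -> : l = sq k + pi ^+ k.+1 * (- y) by rewrite mulrN -ey; ring.
apply: Lam_shift; exact: oN.
Qed.

End Ray.


Lemma ray (hc : valuation_complete v) (r : nat -> vertex v)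
  (hadj : forall n, adj pi (r n) (r n.+1)) (hnb : forall n, r n.+2 <> r n) f1 f2 :
  vcls (r 0) (Lam f1 f2 0 0) ->
  exists sw l, in_o v l /\ forall n, vcls (r n)
     (Lam (if sw then f2 else f1) (if sw then f1 else f2) l n).
Proof.
move=> h0.
have [L' [hL' st1 st2]] := adj_rep (hadj 0) h0.
case: (step (cls_lat hL') o0 st1 st2) => [[t [ht e]] | e].
  rewrite expr0 mul1r add0r in e.
  have Pt : Pr r f1 f2 0 t.
    split => //; first exact: cls_eqv hL' e.
    apply: cls_eqv h0 _; apply: seqv_sym.
    have -> : t = 0 + pi ^+ 0 * t by rewrite expr0 mul1r add0r.
    exact: Lam_shift.
  have [l [hl hn]] := ray_from hc hadj hnb Pt.
  by exists false, l.
have Pt : Pr r f2 f1 0 0.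
  split; [exact: o0| exact: cls_eqv hL' (seqv_trans e (Mam0 _ _))|].
  exact: cls_eqv h0 (Lam00 _ _).
have [l [hl hn]] := ray_from hc hadj hnb Pt.
by exists true, l.
Qed.

Definition Lat f1 f2 e n : vset K := fun w => exists a b1 b2,
  [/\ in_o v a, in_o v b1, in_o v b2 & w = a *: e + pi ^+ n *: lc f1 f2 b1 b2].

Lemma Lam_Lat f1 f2 l n : in_o v l -> seqv (Lam f1 f2 l n) (Lat f1 f2 (lc f1 f2 1 l) n).
Proof.
move=> hl w; split.
  case=> a [b [ha hb ->]]; exists a, 0, b; split => //; first exact: o0.
  by rewrite !lcZ lcD; apply: lc_congr; ring.
case=> a [b1 [b2 [ha hb1 hb2 ->]]].
exists (a + pi ^+ n * b1), (b2 - b1 * l); split.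
- by apply: oD => //; apply: oM => //; exact: opiX.
- by apply: oB => //; apply: oM.
- by rewrite !lcZ lcD; apply: lc_congr; ring.
Qed.
Lemma Lat_swap f1 f2 e n : seqv (Lat f1 f2 e n) (Lat f2 f1 e n).
Proof.
move=> w; split; case=> a [b1 [b2 [ha hb1 hb2 ->]]]; exists a, b2, b1; split => //;
  by rewrite lc_swap.
Qed.

Lemma ray2 (hc : valuation_complete v) (r : nat -> vertex v)
  (hadj : forall n, adj pi (r n) (r n.+1)) (hnb : forall n, r n.+2 <> r n) f1 f2 :
  vcls (r 0) (Lam f1 f2 0 0) ->
  exists c1 c2, [/\ in_o v c1, in_o v c2, c1 = 1 \/ c2 = 1 &
    forall n, vcls (r n) (Lat f1 f2 (lc f1 f2 c1 c2) n)].
Proof.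
move=> h0; have [[|] [l [hl hn]]] := ray hc hadj hnb h0.
  exists l, 1; split => //; [exact: o1| by right| move=> n].
  apply: cls_eqv (hn n) _; apply: seqv_trans (Lam_Lat _ _ _ hl) _.
  by rewrite lc_swap; apply: Lat_swap.
exists 1, l; split => //; [exact: o1| by left| move=> n].
exact: cls_eqv (hn n) (Lam_Lat _ _ _ hl).
Qed.


Lemma Lat_eq f1 f2 c1 c2 a u1 u2 : unit_o a -> in_o v u1 -> in_o v u2 ->
  seqv (Lat f1 f2 (lc f1 f2 c1 c2) 1)
       (Lat f1 f2 (lc f1 f2 (a * c1 + pi * u1) (a * c2 + pi * u2)) 1).
Proof.
move=> ua hu1 hu2; have na : a != 0 by case: ua.
have ia := unit_inv ua.
move=> w; split; case=> al [b1 [b2 [hal hb1 hb2 ->]]].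
  exists (al / a), (b1 - al / a * u1), (b2 - al / a * u2); split.
  - exact: oM.
  - by apply: oB => //; apply: oM => //; apply: oM.
  - by apply: oB => //; apply: oM => //; apply: oM.
  - by rewrite expr1 !lcZ !lcD; apply: lc_congr; field.
exists (al * a), (al * u1 + b1), (al * u2 + b2); split.
- by apply: oM => //; exact: unit_o_o.
- by apply: oD => //; apply: oM.
- by apply: oD => //; apply: oM.
- by rewrite expr1 !lcZ !lcD; apply: lc_congr; ring.
Qed.

Lemma Delta_unit f1 f2 c1 c2 d1 d2 : in_o v c1 -> in_o v c2 -> in_o v d1 -> in_o v d2 ->
  (c1 = 1 \/ c2 = 1) -> (d1 = 1 \/ d2 = 1) ->
  ~ seqv (Lat f1 f2 (lc f1 f2 c1 c2) 1) (Lat f1 f2 (lc f1 f2 d1 d2) 1) ->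
  unit_o (c1 * d2 - c2 * d1).
Proof.
move=> hc1 hc2 hd1 hd2 hc hd nsame.
have hD : in_o v (c1 * d2 - c2 * d1) by apply: oB; apply: oM.
case: (o_cases hD) => [[de [hde ede]] | //].
have nboth : ~ (pm d1 /\ pm d2) by case: hd => -> [] ? ?; exact: pm1.
exfalso; apply: nsame.
case: hc => ec; rewrite ec in ede *.
  have ud1 : unit_o d1.
    case: (o_cases hd1) => [p1|//]; exfalso; apply: nboth; split => //.
    have -> : d2 = d1 * c2 + pi * de by rewrite -ede; ring.
    by apply: pmD; [apply: pmM| apply: pm_pi].
  have -> : lc f1 f2 d1 d2 = lc f1 f2 (d1 * 1 + pi * 0) (d1 * c2 + pi * de).
    by apply: lc_congr; [ring| rewrite -ede; ring].
  by apply: Lat_eq => //; exact: o0.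
have ud2 : unit_o d2.
  case: (o_cases hd2) => [p2|//]; exfalso; apply: nboth; split => //.
  have -> : d1 = d2 * c1 - pi * de by rewrite -ede; ring.
  by apply: pmD; [apply: pmM| apply: pmN; apply: pm_pi].
have -> : lc f1 f2 d1 d2 = lc f1 f2 (d2 * c1 + pi * (- de)) (d2 * 1 + pi * 0).
  by apply: lc_congr; [rewrite mulrN -ede; ring| ring].
by apply: Lat_eq => //; [exact: oN| exact: o0].
Qed.

Lemma span c1 c2 d1 d2 b1 b2 : in_o v c1 -> in_o v c2 -> in_o v d1 -> in_o v d2 ->
  unit_o (c1 * d2 - c2 * d1) -> in_o v b1 -> in_o v b2 ->
  exists al be, [/\ in_o v al, in_o v be, al * c1 + be * d1 = b1 & al * c2 + be * d2 = b2].
Proof.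
move=> hc1 hc2 hd1 hd2 uD hb1 hb2.
have [D eD] : {D | D = c1 * d2 - c2 * d1} by exists (c1 * d2 - c2 * d1).
rewrite -eD in uD.
have nD : D != 0 by case: uD.
have iD := unit_inv uD.
exists ((d2 * b1 - d1 * b2) * D^-1), ((c1 * b2 - c2 * b1) * D^-1); split.
- by apply: oM => //; apply: oB; apply: oM.
- by apply: oM => //; apply: oB; apply: oM.
- have -> : (d2 * b1 - d1 * b2) * D^-1 * c1 + (c1 * b2 - c2 * b1) * D^-1 * d1
      = D^-1 * ((c1 * d2 - c2 * d1) * b1) by ring.
  by rewrite -eD mulKf.
- have -> : (d2 * b1 - d1 * b2) * D^-1 * c2 + (c1 * b2 - c2 * b1) * D^-1 * d2
      = D^-1 * ((c1 * d2 - c2 * d1) * b2) by ring.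
  by rewrite -eD mulKf.
Qed.


Definition col2 (x y : K) : 'cV[K]_2 := \col_(i < 2) (if val i == 0%N then x else y).
Definition mx22 (a b c d : K) : 'M[K]_2 := \matrix_(i < 2, j < 2)
  (if val i == 0%N then (if val j == 0%N then a else b) else (if val j == 0%N then c else d)).

Lemma mx22_col2 a b c d x y : mx22 a b c d *m col2 x y = col2 (a*x + b*y) (c*x + d*y).
Proof.
apply/colP => i; rewrite !mxE !big_ord_recr big_ord0 /= !mxE /= add0r.
by case: i => [[|[|]]].
Qed.
Lemma mx22_mul a b c d a' b' c' d' : mx22 a b c d *m mx22 a' b' c' d' =
  mx22 (a * a' + b * c') (a * b' + b * d') (c * a' + d * c') (c * b' + d * d').
Proof.
apply/matrixP => i j; rewrite !mxE !big_ord_recr big_ord0 /= !mxE /= add0r.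
by case: i => [[|[|]]] //; case: j => [[|[|]]].
Qed.
Lemma mx22_1 : (1%:M : 'M[K]_2) = mx22 1 0 0 1.
Proof. by apply/matrixP => i j; rewrite !mxE; case: i => [[|[|]]] //; case: j => [[|[|]]]. Qed.
Lemma mx22_unit a b c d : a * d - b * c != 0 -> mx22 a b c d \in unitmx.
Proof.
move=> nD.
have h : mx22 a b c d *m mx22 (d / (a * d - b * c)) (- b / (a * d - b * c))
   (- c / (a * d - b * c)) (a / (a * d - b * c)) = 1%:M.
  rewrite mx22_mul mx22_1; congr mx22; field => //.
by case: (mulmx1_unit h).
Qed.
Lemma col2Z k a b : k *: col2 a b = col2 (k * a) (k * b).
Proof. by apply/colP => i; rewrite !mxE; case: (val i == 0%N). Qed.
Lemma col2_lc a b : col2 a b = lc (col2 1 0) (col2 0 1) a b.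
Proof.
apply/colP => i; rewrite !mxE; case: (val i == 0%N) => /=; ring.
Qed.
Lemma Gcol (G : 'M[K]_2) a b : G *m col2 a b = lc (G *m col2 1 0) (G *m col2 0 1) a b.
Proof. by rewrite {1}col2_lc /lc mulmxDr !scalemxAr. Qed.

Definition Sp k : vset K := fun u => exists a b, [/\ in_o v a, in_o v b & u = col2 a (pi ^+ k * b)].
Definition Sm k : vset K := fun u => exists a b, [/\ in_o v a, in_o v b & u = col2 (pi ^+ k * a) b].

Lemma img_eqv h A B : seqv A B -> seqv (mat_image h A) (mat_image h B).
Proof. by move=> e w; split; case=> u [/e hu ->]; exists u. Qed.
Lemma img_scale h a A : seqv (mat_image h (scale_set a A)) (scale_set a (mat_image h A)).
Proof.
move=> w; split.
  case=> u [[u' [hu ->]] ->]; exists (h *m u'); split; [by exists u'| by rewrite scalemxAr].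
case=> u [[u' [hu ->]] ->]; exists (a *: u'); split; [by exists u'| by rewrite scalemxAr].
Qed.
Lemma img_comp h h' A : seqv (mat_image h (mat_image h' A)) (mat_image (h *m h') A).
Proof.
move=> w; split.
  by case=> u [[u' [hu ->]] ->]; exists u'; rewrite mulmxA.
by case=> u [hu ->]; exists (h' *m u); split; [exists u| rewrite mulmxA].
Qed.
Lemma img_conj (P Q : 'M[K]_2) A : P \in unitmx ->
  seqv (mat_image (P *m Q *m invmx P) (mat_image P A)) (mat_image P (mat_image Q A)).
Proof.
move=> uP; apply: seqv_trans (img_comp _ _ _) _.
apply: seqv_trans _ (seqv_sym (img_comp _ _ _)).
by rewrite -mulmxA mulVmx // mulmx1 => w.
Qed.
Lemma img_id A : seqv (mat_image 1%:M A) A.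
Proof. move=> w; split; first by case=> u [hu ->]; rewrite mul1mx.
by move=> h; exists w; rewrite mul1mx. Qed.

Definition Dm := mx22 1 0 0 pi.
Definition Jm := mx22 0 1 1 0.

Lemma D_Sp k : seqv (mat_image Dm (Sp k)) (Sp k.+1).
Proof.
move=> w; split.
  case=> u [[a [b [ha hb ->]]] ->]; exists a, b; split => //.
  by rewrite mx22_col2 exprS; congr col2; ring.
case=> a [b [ha hb ->]]; exists (col2 a (pi ^+ k * b)); split; first by exists a, b.
by rewrite mx22_col2 exprS; congr col2; ring.
Qed.
Lemma D_Sm k : seqv (mat_image Dm (Sm k.+1)) (scale_set pi (Sm k)).
Proof.
move=> w; split.
  case=> u [[a [b [ha hb ->]]] ->]; exists (col2 (pi ^+ k * a) b); split; first by exists a, b.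
  by rewrite mx22_col2 col2Z exprS; congr col2; ring.
case=> u [[a [b [ha hb ->]]] ->]; exists (col2 (pi ^+ k.+1 * a) b); split; first by exists a, b.
by rewrite mx22_col2 col2Z exprS; congr col2; ring.
Qed.
Lemma J_Sp k : seqv (mat_image Jm (Sp k)) (Sm k).
Proof.
move=> w; split.
  case=> u [[a [b [ha hb ->]]] ->]; exists b, a; split => //.
  by rewrite mx22_col2; congr col2; ring.
case=> a [b [ha hb ->]]; exists (col2 b (pi ^+ k * a)); split; first by exists b, a.
by rewrite mx22_col2; congr col2; ring.
Qed.
Lemma J_Sm k : seqv (mat_image Jm (Sm k)) (Sp k).
Proof.
move=> w; split.
  case=> u [[a [b [ha hb ->]]] ->]; exists b, a; split => //.
  by rewrite mx22_col2; congr col2; ring.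
case=> a [b [ha hb ->]]; exists (col2 (pi ^+ k * b) a); split; first by exists b, a.
by rewrite mx22_col2; congr col2; ring.
Qed.
Lemma Dm_unit : Dm \in unitmx.
Proof. by apply: mx22_unit; rewrite mulr0 subr0 mul1r pi0. Qed.
Lemma Jm_unit : Jm \in unitmx.
Proof. by apply: mx22_unit; rewrite mul0r mulr1 sub0r oppr_eq0 oner_neq0. Qed.


Section Pmat.
Variable G : 'M[K]_2.
Variables c1 c2 d1 d2 : K.
Hypotheses (hc1 : in_o v c1) (hc2 : in_o v c2) (hd1 : in_o v d1) (hd2 : in_o v d2).
Hypothesis uD : unit_o (c1 * d2 - c2 * d1).
Let b1 := G *m col2 1 0.
Let b2 := G *m col2 0 1.
Definition Pm := G *m mx22 c1 d1 c2 d2.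

Lemma P_col a b : Pm *m col2 a b = lc b1 b2 (c1 * a + d1 * b) (c2 * a + d2 * b).
Proof. by rewrite /Pm -mulmxA mx22_col2 Gcol. Qed.

Lemma P_Sp k : seqv (mat_image Pm (Sp k)) (Lat b1 b2 (lc b1 b2 c1 c2) k).
Proof.
move=> w; split.
  case=> u [[a [b [ha hb ->]]] ->]; exists a, (b * d1), (b * d2); split => //; try exact: oM.
  by rewrite P_col !lcZ lcD; apply: lc_congr; ring.
case=> a [be1 [be2 [ha hb1 hb2 ->]]].
have [al [be [hal hbe e1 e2]]] := span hc1 hc2 hd1 hd2 uD hb1 hb2.
exists (col2 (a + pi ^+ k * al) (pi ^+ k * be)); split.
  exists (a + pi ^+ k * al), be; split => //; apply: oD => //; apply: oM => //; exact: opiX.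
by rewrite P_col !lcZ lcD -e1 -e2; apply: lc_congr; ring.
Qed.

Lemma unit_oN x : unit_o x -> unit_o (- x).
Proof. by case=> nx vx; split; [rewrite oppr_eq0| rewrite vN]. Qed.

Lemma P_Sm k : seqv (mat_image Pm (Sm k)) (Lat b1 b2 (lc b1 b2 d1 d2) k).
Proof.
move=> w; split.
  case=> u [[a [b [ha hb ->]]] ->]; exists b, (a * c1), (a * c2); split => //; try exact: oM.
  by rewrite P_col !lcZ lcD; apply: lc_congr; ring.
case=> a [be1 [be2 [ha hb1 hb2 ->]]].
have uD' : unit_o (d1 * c2 - d2 * c1).
  have -> : d1 * c2 - d2 * c1 = - (c1 * d2 - c2 * d1) by ring.
  exact: unit_oN.
have [al [be [hal hbe e1 e2]]] := span hd1 hd2 hc1 hc2 uD' hb1 hb2.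
exists (col2 (pi ^+ k * be) (a + pi ^+ k * al)); split.
  exists be, (a + pi ^+ k * al); split => //; apply: oD => //; apply: oM => //; exact: opiX.
by rewrite P_col !lcZ lcD -e1 -e2; apply: lc_congr; ring.
Qed.

Lemma Pm_unit : G \in unitmx -> Pm \in unitmx.
Proof.
move=> uG; rewrite /Pm unitmx_mul uG /=; apply: mx22_unit.
have -> : c1 * d2 - d1 * c2 = c1 * d2 - c2 * d1 by ring.
by case: uD.
Qed.
End Pmat.


Lemma hom_image (h : 'M[K]_2) A B : homothetic A B -> homothetic (mat_image h A) (mat_image h B).
Proof.
case=> a [na e]; exists a; split => //.
apply: seqv_trans (img_eqv h e) _; exact: img_scale.
Qed.

Section Act.
Variable h : 'M[K]_2.
Hypothesis hu : h \in unitmx.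

Definition act_cls (x : vertex v) : vset K -> Prop := fun L' =>
  is_lattice v L' /\ exists L, vcls x L /\ homothetic (mat_image h L) L'.

Lemma act_ok x : is_hclass v (act_cls x).
Proof.
have [L0 [l0 hC]] := vcls_ok x.
have x0 : vcls x L0 by apply/hC; split => //; exact: hom_refl.
exists (mat_image h L0); split; first exact: lat_image.
move=> L'; split.
  case=> lL' [L [hL hh]]; split => //.
  have [_ h0] := (hC L).1 hL.
  exact: hom_trans (hom_image h h0) hh.
by case=> lL' hh; split => //; exists L0.
Qed.

Definition act x := Vertex (act_ok x).

Lemma act_mem x L : vcls x L -> vcls (act x) (mat_image h L).
Proof.
move=> hL; split; first by apply: lat_image => //; exact: cls_lat hL.
by exists L; split => //; exact: hom_refl.
Qed.

Lemma strict_img A B : strict_subset A B -> strict_subset (mat_image h A) (mat_image h B).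
Proof.
case=> s [w [hB nA]]; split.
  by move=> u [u' [hu' ->]]; exists u'; split => //; apply: s.
exists (h *m w); split; first by exists w.
case=> u [hu' e]; apply: nA.
have -> : w = u by rewrite -(mulKmx hu w) e mulKmx.
done.
Qed.

Lemma adj_act x y : adj pi x y -> adj pi (act x) (act y).
Proof.
case=> L [L' [hL [hL' [s1 s2]]]].
exists (mat_image h L), (mat_image h L'); split; first exact: act_mem.
split; first exact: act_mem.
split; last exact: strict_img.
apply: strict_eqv (strict_img s1) => //; exact: img_scale.
Qed.

Lemma walk_act n x y : walk pi n x y -> walk pi n (act x) (act y).
Proof.
elim=> [z|m z1 z2 z3 ha _ IH]; first exact: walk0.
apply: walkS IH; exact: adj_act.
Qed.

Lemma dist_act x y n : dist_le pi x y n -> dist_le pi (act x) (act y) n.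
Proof. by case=> m hm hw; exists m => //; exact: walk_act. Qed.
End Act.

Lemma act_cancel (h : 'M[K]_2) (hu : h \in unitmx) (hu' : invmx h \in unitmx) y :
  act hu' (act hu y) = y.
Proof.
have [L0 [l0 hC]] := vcls_ok y.
have y0 : vcls y L0 by apply/hC; split => //; exact: hom_refl.
apply: vertex_eq (act_mem hu' (act_mem hu y0)) y0 _.
apply: seqv_trans (img_comp _ _ _) _.
rewrite mulVmx //; exact: img_id.
Qed.
Lemma act_cancel' (h : 'M[K]_2) (hu : h \in unitmx) (hu' : invmx h \in unitmx) y :
  act hu (act hu' y) = y.
Proof.
have [L0 [l0 hC]] := vcls_ok y.
have y0 : vcls y L0 by apply/hC; split => //; exact: hom_refl.
apply: vertex_eq (act_mem hu (act_mem hu' y0)) y0 _.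
apply: seqv_trans (img_comp _ _ _) _.
rewrite mulmxV //; exact: img_id.
Qed.

Lemma act_Ghat (h : 'M[K]_2) (hu : h \in unitmx) e : Ghat pi e (act hu).
Proof.
have hu' : invmx h \in unitmx by rewrite unitmx_inv.
split; last first.
  move=> x1 x2 _; exists h => // y _ L; exact: act_mem.
split.
  by exists (act hu'); [move=> y; exact: act_cancel| move=> y; exact: act_cancel'].
move=> x y n; split; first exact: dist_act.
move=> /(dist_act hu'); by rewrite !act_cancel.
Qed.


Lemma col2_entries (c : 'cV[K]_2) : c = col2 (c 0 0) (c 1 0).
Proof. by apply/colP => i; rewrite !mxE; case: i => [[|[|]]] //= ?; congr (c _ _); apply: val_inj. Qed.

Lemma main_aux (hc : valuation_complete v) (x : int -> vertex v) (hx : dinf_path pi x) e :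
  exists alpha tau : vertex v -> vertex v,
    [/\ Ghat pi e alpha, Ghat pi e tau &
        forall n : int, alpha (x n) = x (- n) /\ tau (x n) = x (n + 1)].
Proof.
case: hx => xinj xadj.
have [L0 [l0 hC]] := vcls_ok (x 0).
have x0 : vcls (x 0) L0 by apply/hC; split => //; exact: hom_refl.
have [G [uG hG]] := l0.
pose b1 := G *m col2 1 0; pose b2 := G *m col2 0 1.
have hL : seqv L0 (Lam b1 b2 0 0).
  move=> w; split.
    move/hG => [c [hc' ->]]; exists (c 0 0), (c 1 0); split => //.
    by rewrite {1}(col2_entries c) Gcol; apply: lc_congr; ring.
  case=> a [b [ha hb ->]]; apply/hG; exists (col2 a b); split.
    by move=> i; rewrite mxE; case: (val i == 0%N).
  by rewrite Gcol; apply: lc_congr; ring.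
have x0' : vcls (x 0) (Lam b1 b2 0 0) by exact: cls_eqv x0 hL.
have [c1 [c2 [hc1 hc2 hc12 hcp]]] : exists c1 c2, [/\ in_o v c1, in_o v c2, c1 = 1 \/ c2 = 1 &
    forall n, vcls (x (Posz n)) (Lat b1 b2 (lc b1 b2 c1 c2) n)].
  apply: (@ray2 hc (fun n => x (Posz n))) => //.
  - move=> n; have -> : Posz n.+1 = Posz n + 1 by lia.
    exact: xadj.
  - by move=> n /xinj; lia.
have [d1 [d2 [hd1 hd2 hd12 hdm]]] : exists d1 d2, [/\ in_o v d1, in_o v d2, d1 = 1 \/ d2 = 1 &
    forall n, vcls (x (- Posz n)) (Lat b1 b2 (lc b1 b2 d1 d2) n)].
  apply: (@ray2 hc (fun n => x (- Posz n))) => //.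
  - move=> n; apply: adj_sym.
    have -> : - Posz n = - Posz n.+1 + 1 by lia.
    exact: xadj.
  - by move=> n /xinj; lia.
have uD : unit_o (c1 * d2 - c2 * d1).
  apply: Delta_unit hc1 hc2 hd1 hd2 hc12 hd12 _ => same.
  have := vertex_eq (hcp 1%N) (hdm 1%N) same => /xinj; lia.
pose P := Pm G c1 c2 d1 d2.
have uP : P \in unitmx by exact: Pm_unit.
have xp : forall k, vcls (x (Posz k)) (mat_image P (Sp k)).
  move=> k; apply: cls_eqv (hcp k) _; apply: seqv_sym; exact: P_Sp.
have xm : forall k, vcls (x (- Posz k)) (mat_image P (Sm k)).
  move=> k; apply: cls_eqv (hdm k) _; apply: seqv_sym.
  have := P_Sm G hc1 hc2 hd1 hd2 uD k; done.
have uP' : invmx P \in unitmx by rewrite unitmx_inv.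
have uA : P *m Jm *m invmx P \in unitmx by rewrite unitmx_mul uP' andbT unitmx_mul Jm_unit andbT.
have uT : P *m Dm *m invmx P \in unitmx by rewrite unitmx_mul uP' andbT unitmx_mul Dm_unit andbT.
exists (act uA), (act uT); split; try exact: act_Ghat.
case=> k.
  split.
    apply: vertex_eq (act_mem uA (xp k)) (xm k) _.
    apply: seqv_trans (img_conj _ _ uP) _; apply: img_eqv; exact: J_Sp.
  have -> : Posz k + 1 = Posz k.+1 by lia.
  apply: vertex_eq (act_mem uT (xp k)) (xp k.+1) _.
  apply: seqv_trans (img_conj _ _ uP) _; apply: img_eqv; exact: D_Sp.
rewrite NegzE; split.
  rewrite opprK; apply: vertex_eq (act_mem uA (xm k.+1)) (xp k.+1) _.
  apply: seqv_trans (img_conj _ _ uP) _; apply: img_eqv; exact: J_Sm.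
have -> : - Posz k.+1 + 1 = - Posz k by lia.
apply: vertex_eq (act_mem uT (xm k.+1)) (cls_scale (xm k) pi0) _.
apply: seqv_trans (img_conj _ _ uP) _.
apply: seqv_trans (img_eqv _ (D_Sm k)) _; exact: img_scale.
Qed.

End Val.

Unset Implicit Arguments.
Set Strict Implicit.

Theorem mainTheorem7 (F : fieldType) (v : F -> int) (pi : F)
    (hF : nonarch_local_field v pi) (e : nat) (he : (1 <= e)%N)
    (x : int -> vertex v) (hx : dinf_path pi x) :
  exists alpha tau : vertex v -> vertex v,
    [/\ Ghat pi e alpha, Ghat pi e tau &
        forall n : int, alpha (x n) = x (- n) /\ tau (x n) = x (n + 1)].
Proof.
case: hF => hv hc _; exact: (@main_aux F v pi hv hc x hx e).
Qed.
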